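(* Let $Q$ be the unique positive radial solution in $H^1(\mathbb{R}^2)$ of $-\Delta u+u-u^3=0$ and $a^*=\|Q\|_2^2$. Suppose positive constants $b_1,b_2,\beta$ satisfy $0<b_1<b_2<a^*$ and $b_2\le2\beta+b_1$. Define $$l(t)=\frac{t^2+t}{\frac{b_2}{2}t^2+\beta t+\frac{b_1}{2}},\quad t\in[0,\infty).$$ Then $l(t)>l(1)=\frac{2}{\frac{b_2}{2}+\beta+\frac{b_1}{2}}$ for all $t\in(1,\infty)$. *)

(* Defs.v *)
From Stdlib Require Import Reals Lra.
From Coquelicot Require Import Coquelicot.
Open Scope R_scope.

(* Q(x) = q(|x|) on R^2: q is the radial profile of the positive radial
   H^1(R^2) solution of  -Delta u + u - u^3 = 0.  In polar coordinates the
   Laplacian of a radial function is q'' + q'/r. *)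
Definition is_ground_state_profile (q : R -> R) : Prop :=
  (forall r, 0 <= r -> 0 < q r) /\
  continuous q 0 /\
  (forall r, 0 < r ->
     ex_derive q r /\ ex_derive (Derive q) r /\
     - (Derive_n q 2 r + Derive q r / r) + q r - q r ^ 3 = 0) /\
  (* Q in H^1(R^2): Q and grad Q square integrable (polar coordinates) *)
  ex_RInt_gen (fun r => 2 * PI * r * (q r) ^ 2) (at_right 0) (Rbar_locally p_infty) /\
  ex_RInt_gen (fun r => 2 * PI * r * (Derive q r) ^ 2) (at_right 0) (Rbar_locally p_infty).

Definition is_astar (q : R -> R) (astar : R) : Prop :=
  is_RInt_gen (fun r => 2 * PI * r * (q r) ^ 2) (at_right 0) (Rbar_locally p_infty) astar.

Definition l_fun (b1 b2 beta t : R) : R :=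
  (t ^ 2 + t) / (b2 / 2 * t ^ 2 + beta * t + b1 / 2).

(* Main.v *)
Require Import Defs.
From Stdlib Require Import Reals Lra Psatz.
From Coquelicot Require Import Coquelicot.
Open Scope R_scope.

Theorem lemmaA1 (q : R -> R) (astar b1 b2 beta : R) :
  is_ground_state_profile q -> is_astar q astar ->
  0 < b1 -> b1 < b2 -> b2 < astar -> 0 < beta -> b2 <= 2 * beta + b1 ->
  l_fun b1 b2 beta 1 = 2 / (b2 / 2 + beta + b1 / 2) /\
  (forall t, 1 < t -> l_fun b1 b2 beta t > l_fun b1 b2 beta 1).
Proof.
  intros _ _ H1 H2 _ H3 H4.
  unfold l_fun. split.
  - f_equal; ring.
  - intros t Ht.
    assert (HD : 0 < b2 / 2 * t ^ 2 + beta * t + b1 / 2) by nra.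
    assert (HS : 0 < b2 / 2 * 1 ^ 2 + beta * 1 + b1 / 2) by nra.
    apply Rlt_gt.
    apply (Rmult_lt_reg_r (b2 / 2 * t ^ 2 + beta * t + b1 / 2)); auto.
    apply (Rmult_lt_reg_r (b2 / 2 * 1 ^ 2 + beta * 1 + b1 / 2)); auto.
    field_simplify; try lra.
    assert (HA : 0 <= beta + b1/2 - b2/2) by lra.
    assert (0 < (t - 1) * ((beta + b1/2 - b2/2) * t + b1)) by
      (apply Rmult_lt_0_compat; nra).
    nra.
Qed.
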